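(* Let $P$ be a poset and let $\overline{down(P)}$ denote the topological closure of $down(P)=\{\downarrow x: x\in P\}$ in $\mathfrak{P}(P)$. Then $down(P)\subseteq \mathcal{J}(P)\subseteq \overline{down(P)}\setminus\{\emptyset\}$. In particular, $down(P)$ and $\mathcal{J}(P)$ have the same topological closure in $\mathfrak{P}(P)$.
   Context: $\mathfrak{P}(P)$ is the power set of $P$ with the topology whose basic open sets are $O(F,G)=\{X\subseteq P: F\subseteq X,\ G\cap X=\emptyset\}$ for finite $F,G\subseteq P$. $\mathcal{J}(P)$ is the set of ideals of $P$: nonempty initial segments (closed downward) which are up-directed. $\downarrow x=\{y\in P:y\leq x\}$. *)

(* Defs.v *)
From HB Require Import structures.
From mathcomp Require Import all_boot all_order.
From mathcomp Require Import boolp classical_sets cardinality.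
Set Implicit Arguments. Unset Strict Implicit. Unset Printing Implicit Defensive.
Import Order.TTheory.
Local Open Scope classical_set_scope.
Local Open Scope order_scope.

Section Defs.
Context {d : Order.disp_t} {P : porderType d}.

Definition downset (x : P) : set P := [set y | y <= x].

Definition downsP : set (set P) := [set D | exists x : P, D = downset x].

Definition is_ideal (I : set P) : Prop :=
  I !=set0 /\
  (forall x y : P, I x -> y <= x -> I y) /\
  (forall x y : P, I x -> I y -> exists z : P, I z /\ x <= z /\ y <= z).

Definition idealsP : set (set P) := [set I | is_ideal I].

Definition basic_open (F G : set P) : set (set P) :=
  [set X | F `<=` X /\ G `&` X = set0].

Definition pset_open (U : set (set P)) : Prop :=
  forall X, U X -> exists F G : set P,
    finite_set F /\ finite_set G /\ basic_open F G X /\ basic_open F G `<=` U.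

Definition pset_closure (A : set (set P)) : set (set P) :=
  [set X | forall U, pset_open U -> U X -> U `&` A !=set0].

End Defs.

(* Main.v *)
Require Import Defs.
From HB Require Import structures.
From mathcomp Require Import all_boot all_order.
From mathcomp Require Import boolp classical_sets cardinality.
Local Open Scope classical_set_scope.
Import Order.TTheory.

Lemma ideal_ub (d : Order.disp_t) (P : porderType d) (I : set P) (s : seq P) :
  is_ideal I -> (forall x, x \in s -> I x) ->
  exists z, I z /\ forall x, x \in s -> (x <= z)%O.
Proof.
move=> [[a Ia] [dc dir]]; elim: s => [|y s IH] H.
  by exists a; split => // x; rewrite in_nil.
have [z [Iz Hz]] : exists z, I z /\ forall x, x \in s -> (x <= z)%O.
  by apply: IH => x xs; apply: H; rewrite inE xs orbT.
have Iy : I y by apply: H; rewrite inE eqxx.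
have [w [Iw [yw zw]]] := dir y z Iy Iz.
exists w; split => // x; rewrite inE => /orP [/eqP -> //|xs].
exact: le_trans (Hz x xs) zw.
Qed.



Theorem lemma3p2 (d : Order.disp_t) (P : porderType d) :
  (@downsP d P `<=` idealsP) /\
  (@idealsP d P `<=` pset_closure downsP `\` [set set0]) /\
  pset_closure (@downsP d P) = pset_closure idealsP.
Proof.
have h1 : @downsP d P `<=` idealsP.
  move=> D [x ->]; split; first by exists x; rewrite /downset /=.
  split.
    by move=> a b; rewrite /downset /= => ax ba; exact: le_trans ba ax.
  by move=> a b ax bx; exists x; rewrite /downset /=.
have h2 : forall I, @idealsP d P I -> pset_closure downsP I.
  move=> I HI U Uo UI.
  have [F [G [fF [fG [[FI GI] sub]]]]] := Uo I UI.
  have [s Fs] := proj1 (finite_seqP F) fF.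
  have [z [Iz Hz]] := @ideal_ub d P I s HI (fun x xs => FI x ltac:(by rewrite Fs)).
  exists (downset z); split; last by exists z.
  apply: sub; split.
    by move=> x Fx; apply: Hz; move: Fx; rewrite Fs.
  apply/seteqP; split => // x [Gx zx].
  have Ix : I x by case: HI => _ [dc _]; exact: dc Iz zx.
  by move: GI => /seteqP [GI' _]; exact: (GI' x (conj Gx Ix)).
split => //; split.
  move=> I HI; split; first exact: h2.
  move=> /= E; case: HI => [[a Ia] _]; by rewrite E in Ia.
apply/seteqP; split.
  move=> X HX U Uo UX; have [Y [UY DY]] := HX U Uo UX.
  by exists Y; split => //; apply: h1.
move=> X HX U Uo UX; have [Y [UY IY]] := HX U Uo UX.
exact: h2 IY U Uo UY.
Qed.
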